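(* Let $N\ge 2$ and $0<\gamma_1\le\dots\le\gamma_N$. There exists a sum-rate optimal spanning tree $T$ on $\{1,\dots,N\}$ such that for every $0<i<N-1$, the vertex $N-i$ has at most one neighbor $u$ with $\gamma_u<\gamma_{N-i}$ (hence at least $\deg(N-i)-1$ neighbors with SNR at least $\gamma_{N-i}$), and $\deg(N-i)\le i+1$.
   Context: For distinct $i,j$ put $\varphi(i,j)=\log_2\!\big(\gamma_i+\frac{\gamma_i}{\gamma_i+\gamma_j}\big)$. For a spanning tree $T$ on $\{1,\dots,N\}$ with neighbor sets $A_i^T$, define $R_{\mathrm s}(T)=\frac{1}{2(N-1)}\sum_{i=1}^N \min_{j\in A_i^T}\varphi(i,j)$. A spanning tree is called sum-rate optimal if it maximizes $R_{\mathrm s}$ over all spanning trees on $\{1,\dots,N\}$. The value $\gamma_k$ is called the SNR of vertex $k$. *)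

(* Defs.v *)
From mathcomp Require Import all_boot.
From Stdlib Require Import Reals.

Set Implicit Arguments.
Unset Strict Implicit.
Unset Printing Implicit Defensive.

(* Vertex k of the paper ({1,...,N}) is the ordinal k-1 : 'I_N. *)

Definition simple_graph (N : nat) (e : rel 'I_N) : Prop :=
  (forall x y, e x y = e y x) /\ (forall x, e x x = false).

Definition connected_graph (N : nat) (e : rel 'I_N) : Prop :=
  forall x y, connect e x y.

Definition acyclic_graph (N : nat) (e : rel 'I_N) : Prop :=
  forall c : seq 'I_N, uniq c -> (3 <= size c)%N -> ~~ cycle e c.

Definition spanning_tree (N : nat) (e : rel 'I_N) : Prop :=
  simple_graph e /\ connected_graph e /\ acyclic_graph e.

Definition log2 (x : R) : R := (ln x / ln 2)%R.

Definition phi (N : nat) (g : 'I_N -> R) (i j : 'I_N) : R :=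
  log2 (g i + g i / (g i + g j))%R.

(* minimum of phi(i,j) over the neighbours j of i (0 if no neighbour,
   which never happens in a spanning tree with N >= 2) *)
Definition min_phi (N : nat) (g : 'I_N -> R) (e : rel 'I_N) (i : 'I_N) : R :=
  match [seq phi g i j | j <- enum 'I_N & e i j] with
  | [::] => 0%R
  | x :: s => foldl Rmin x s
  end.

Definition sum_rate (N : nat) (g : 'I_N -> R) (e : rel 'I_N) : R :=
  (/ (2 * (INR N - 1)) *
   foldr Rplus 0 [seq min_phi g e i | i <- enum 'I_N])%R.

Definition sum_rate_optimal (N : nat) (g : 'I_N -> R) (e : rel 'I_N) : Prop :=
  spanning_tree e /\
  forall e' : rel 'I_N, spanning_tree e' -> (sum_rate g e' <= sum_rate g e)%R.

Definition degree (N : nat) (e : rel 'I_N) (v : 'I_N) : nat :=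
  #|[pred j | e v j]|.

(* Main.v *)
Require Import Defs.
From mathcomp Require Import all_boot.
From Stdlib Require Import Reals Lra.
From mathcomp Require Import zify.

Set Implicit Arguments.
Unset Strict Implicit.
Unset Printing Implicit Defensive.

Definition trel (N : nat) (p : {ffun 'I_N -> 'I_N}) : rel 'I_N :=
  fun a b => ((0 < a) && (p a == b)) || ((0 < b) && (p b == a)).

Definition validp N (p : {ffun 'I_N -> 'I_N}) : bool :=
  [forall v : 'I_N, (0 < v) ==> (p v < v)].

Lemma validP N (p : {ffun 'I_N -> 'I_N}) :
  reflect (forall v : 'I_N, 0 < v -> p v < v) (validp p).
Proof.
apply: (iffP forallP) => H v.
- by move=> hv; move: (H v); rewrite hv.
- by apply/implyP; apply: H.
Qed.

Lemma trel_low N (p : {ffun 'I_N -> 'I_N}) v u :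
  validp p -> trel p v u -> u < v -> u = p v.
Proof.
move/validP=> H; rewrite /trel => /orP[/andP[_ /eqP ->]//|/andP[hu /eqP e]] huv.
by move: (H u hu); rewrite e ltnNge (ltnW huv).
Qed.

Lemma seq_max N (c : seq 'I_N) : c != [::] ->
  exists2 m, m \in c & forall x, x \in c -> x <= m.
Proof.
elim: c => // a [|b s] IH _.
  by exists a => [|x]; rewrite ?inE // => /eqP->.
case: IH => // m ms mm.
case: (leqP a m) => ham.
- exists m; first by rewrite inE ms orbT.
  by move=> x; rewrite inE => /orP[/eqP->//|]; apply mm.
- exists a; first by rewrite inE eqxx.
  move=> x; rewrite inE => /orP[/eqP->//|/mm hx]; exact: leq_trans hx (ltnW ham).
Qed.

Lemma trel_spanning N (p : {ffun 'I_N -> 'I_N}) :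
  validp p -> spanning_tree (trel p).
Proof.
move=> vp; split; [|split].
- split; first by move=> x y; rewrite /trel orbC.
  move=> a; rewrite /trel orbb; apply/negbTE/negP => /andP[ha /eqP e].
  by move/validP: vp => /(_ a ha); rewrite e ltnn.
- have H0 : forall v w : 'I_N, nat_of_ord w = 0 -> connect (trel p) v w.
    move=> v w hw; move: {2}(nat_of_ord v) (leqnn v) => n; elim: n v => [|n IH] v hv.
      by have -> : v = w by apply: val_inj; rewrite /= hw; move: hv; rewrite leqn0 => /eqP.
    case: (posnP v) => hv0.
      by have -> : v = w by apply: val_inj; rewrite /= hw hv0.
    have hvp : trel p v (p v) by rewrite /trel hv0 eqxx.
    apply: connect_trans (connect1 hvp) _.
    apply: IH; by move/validP: vp => /(_ v hv0) hp; rewrite -ltnS; exact: leq_trans hp hv.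
  move=> x y.
  pose w : 'I_N := Ordinal (leq_ltn_trans (leq0n x) (ltn_ord x)).
  apply: connect_trans (H0 x w erefl) _.
  rewrite (sym_connect_sym (e:=trel p)); first exact: H0.
  by move=> a b; rewrite /trel orbC.
- move=> c uc sc; apply/negP => cc.
  have [m mc mmax] : exists2 m, m \in c & forall x, x \in c -> x <= m.
    by apply: seq_max; case: c sc {uc cc}.
  case: (rot_to mc) => i s hs.
  move: cc uc sc; rewrite -(rot_cycle i) -(rot_uniq i) -(size_rot i) hs.
  case: s hs => [|a s] hs //.
  case/lastP: s hs => [|t b] hs //.
  rewrite /= => /andP[ema]; rewrite rcons_path last_rcons => /andP[_ ebm].
  case/andP=> mn /andP[ab _] _.
  have ina : a \in c by rewrite -(mem_rot i) hs !inE eqxx orbT.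
  have inb : b \in c by rewrite -(mem_rot i) hs !inE mem_rcons inE eqxx !orbT.
  have am : a < m.
    by rewrite ltn_neqAle mmax // andbT; apply/eqP => /val_inj e; move: mn; rewrite e !inE eqxx.
  have bm : b < m.
    by rewrite ltn_neqAle mmax // andbT; apply/eqP => /val_inj e; move: mn;
      rewrite e !inE mem_rcons inE eqxx !orbT.
  have e1 := trel_low vp ema am.
  have e2 : b = p m.
    by apply: trel_low vp _ bm; rewrite /trel orbC.
  by move: ab; rewrite e1 -e2 mem_rcons inE eqxx.
Qed.

Definition er N (e : rel 'I_N) (v : 'I_N) : rel 'I_N :=
  fun a b => [&& e a b, v <= a & v <= b].

Definition cpar N (e : rel 'I_N) : {ffun 'I_N -> 'I_N} :=
  [ffun v : 'I_N => odflt v [pick u : 'I_N | (u < v) && [exists y, connect (er e v) v y && e y u]]].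

Lemma er_path N (e : rel 'I_N) v : forall q x,
  path (er e v) x q -> v <= x -> v <= last x q.
Proof.
elim=> [|z q IH] x //= /andP[/and3P[_ _ hz] hp] _; exact: IH hp hz.
Qed.

Lemma er_ge N (e : rel 'I_N) v y : connect (er e v) v y -> v <= y.
Proof. by case/connectP=> q hq ->; apply: er_path hq _. Qed.

Lemma walk N (e : rel 'I_N) v : forall q x, path e x q -> connect (er e v) v x ->
  last x q < v -> exists y u, [/\ connect (er e v) v y, e y u & u < v].
Proof.
elim=> [|z q IH] x /=.
  by move=> _ /er_ge hx hl; rewrite ltnNge hx in hl.
case/andP=> exz hp cx hl.
case: (ltnP z v) => hz; first by exists x, z.
apply: (IH z hp _ hl).
have hvx := er_ge cx.
have hxz : er e v x z by rewrite /er exz hvx hz.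
exact: connect_trans cx (connect1 hxz).
Qed.

Lemma cpar_spec N (e : rel 'I_N) : connected_graph e -> forall v : 'I_N, 0 < v ->
  cpar e v < v /\ exists y, connect (er e v) v y /\ e y (cpar e v).
Proof.
move=> ce v hv; rewrite ffunE; case: pickP => [u /andP[hu /existsP[y /andP[hy hyu]]] | H].
  by split=> //; exists y.
exfalso.
pose w : 'I_N := Ordinal (leq_ltn_trans (leq0n v) (ltn_ord v)).
case/connectP: (ce v w) => q hq hl.
have hl2 : last v q < v by rewrite -hl.
have [y [u [h1 h2 h3]]] := walk hq (connect0 _ _) hl2.
move: (H u); rewrite h3 /=; move/negbT/negP; apply.
by apply/existsP; exists y; rewrite h1 h2.
Qed.

Lemma cpar_valid N (e : rel 'I_N) : connected_graph e -> validp (cpar e).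
Proof. by move=> ce; apply/validP => v hv; case: (cpar_spec ce hv). Qed.

Lemma cpar_nb N (e : rel 'I_N) : simple_graph e -> connected_graph e ->
  forall x j, trel (cpar e) x j -> exists y, e x y /\ j <= y.
Proof.
move=> [se _] ce x j; rewrite /trel => /orP[/andP[hx /eqP hj]|/andP[hj /eqP hx]].
- have [hlt [y [cy ey]]] := cpar_spec ce hx.
  rewrite hj in hlt ey.
  case/connectP: cy => [[|z q]] /= hq hy.
    by subst y; exists j.
  case/andP: hq => /and3P[exz _ hxz] _.
  by exists z; split=> //; exact: leq_trans (ltnW hlt) hxz.
- have [hlt [y [cy ey]]] := cpar_spec ce hj.
  rewrite hx in ey.
  by exists y; rewrite se; split=> //; apply: er_ge cy.
Qed.

Definition mfold (l : seq R) : R :=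
  match l with [::] => 0%R | x :: s => foldl Rmin x s end.

Lemma foldmin_le (T : eqType) (f : T -> R) : forall s x,
  (foldl Rmin x (map f s) <= x)%R /\
  forall a, a \in s -> (foldl Rmin x (map f s) <= f a)%R.
Proof.
elim=> [|b s IH] x /=; first by split=> //; apply: Rle_refl.
have [h1 h2] := IH (Rmin x (f b)).
split.
  exact: Rle_trans h1 (Rmin_l _ _).
move=> a; rewrite inE => /orP[/eqP->|/h2 //].
exact: Rle_trans h1 (Rmin_r _ _).
Qed.

Lemma mfold_le (T : eqType) (f : T -> R) s a : a \in s -> (mfold (map f s) <= f a)%R.
Proof.
case: s => [//|b s]; rewrite inE /= => /orP[/eqP->|ha].
  by case: (foldmin_le f s (f b)).
by case: (foldmin_le f s (f b)) => _; apply.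
Qed.

Lemma foldmin_P (T : eqType) (f : T -> R) (P : R -> Prop) : forall s x,
  P x -> (forall a, a \in s -> P (f a)) -> P (foldl Rmin x (map f s)).
Proof.
elim=> [|b s IH] x //= hx ha.
apply: IH.
  by apply: Rmin_case => //; apply: ha; rewrite inE eqxx.
by move=> a h; apply: ha; rewrite inE h orbT.
Qed.

Lemma min_phiE N g (e : rel 'I_N) x :
  min_phi g e x = mfold (map (phi g x) [seq j <- enum 'I_N | e x j]).
Proof. by []. Qed.

Lemma ln2_pos : (0 < ln 2)%R.
Proof. rewrite -ln_1; apply: ln_increasing; lra. Qed.

Lemma phi_mono N (g : 'I_N -> R) x y j : (forall k, 0 < g k)%R ->
  (g j <= g y)%R -> (phi g x y <= phi g x j)%R.
Proof.
move=> gp h; rewrite /phi /log2 /Rdiv.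
apply: Rmult_le_compat_r.
  by left; apply: Rinv_0_lt_compat; apply: ln2_pos.
have gx := gp x; have gy := gp y; have gj := gp j.
have hle : (g x * / (g x + g y) <= g x * / (g x + g j))%R.
  apply: Rmult_le_compat_l; first lra.
  apply: Rinv_le_contravar; lra.
have hpos : (0 < g x * / (g x + g y))%R.
  apply: Rmult_lt_0_compat => //; apply: Rinv_0_lt_compat; lra.
case: (Rle_lt_or_eq_dec _ _ hle) => hl.
  left; apply: ln_increasing; lra.
by rewrite hl; apply: Rle_refl.
Qed.

Lemma min_phi_le N (g : 'I_N -> R) (e1 e2 : rel 'I_N) x :
  (forall k, 0 < g k)%R -> (forall k l : 'I_N, k <= l -> (g k <= g l)%R) ->
  (exists j, e2 x j) -> (forall j, e2 x j -> exists y, e1 x y /\ j <= y) ->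
  (min_phi g e1 x <= min_phi g e2 x)%R.
Proof.
move=> gp gm [j0 hj0] H.
have key : forall j, e2 x j -> (min_phi g e1 x <= phi g x j)%R.
  move=> j /H [y [ey hy]].
  apply: Rle_trans (phi_mono x gp (gm _ _ hy)).
  rewrite min_phiE; apply: mfold_le.
  by rewrite mem_filter ey mem_enum.
rewrite [min_phi g e2 x]min_phiE.
have : j0 \in [seq j <- enum 'I_N | e2 x j] by rewrite mem_filter hj0 mem_enum.
case: [seq j <- enum 'I_N | e2 x j] (fun j => @mem_filter _ (e2 x) j (enum 'I_N)) => [//|b s] hm _ /=.
apply: (foldmin_P (P := fun r => min_phi g e1 x <= r)%R).
  by apply: key; move: (hm b); rewrite inE eqxx /= => /esym /andP[].
move=> a ha; apply: key.
by move: (hm a); rewrite inE ha orbT => /esym /andP[].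
Qed.

Lemma sum_rate_le N (g : 'I_N -> R) e1 e2 : 2 <= N ->
  (forall x, min_phi g e1 x <= min_phi g e2 x)%R -> (sum_rate g e1 <= sum_rate g e2)%R.
Proof.
move=> hN H; rewrite /sum_rate.
apply: Rmult_le_compat_l.
  have : (INR 2 <= INR N)%R by apply: le_INR; apply/leP.
  rewrite /= => h; left; apply: Rinv_0_lt_compat; lra.
elim: (enum 'I_N) => [|a s IH] /=; first by apply: Rle_refl.
exact: Rplus_le_compat.
Qed.

Lemma argmax (T : eqType) (f : T -> R) (l : seq T) a : a \in l ->
  exists2 b, b \in l & forall c, c \in l -> (f c <= f b)%R.
Proof.
elim: l a => // x s IH a.
case: s IH => [|y s] IH.
  move=> _; exists x; first by rewrite inE.
  by move=> c; rewrite inE => /eqP->; apply: Rle_refl.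
move=> _; have [b bs bm] := IH y (mem_head _ _).
case: (Rle_lt_dec (f x) (f b)) => h.
- exists b; first by rewrite inE bs orbT.
  by move=> c; rewrite inE => /orP[/eqP->//|]; exact: bm.
- exists x; first by rewrite inE eqxx.
  move=> c; rewrite inE => /orP[/eqP->|/bm hc]; [apply: Rle_refl | lra].
Qed.
Lemma card_gt N (v : 'I_N) : #|[pred j : 'I_N | v < j]| = N - v.+1.
Proof.
rewrite cardE -(size_map val) /enum_mem -filter_map -enumT /= val_enum_ord size_filter.
have := ltn_ord v. move: (nat_of_ord v) => k hk.
rewrite -(subnKC hk) iotaD count_cat /= !add0n addKn.
rewrite (eq_in_count (a2 := pred0)); last first.
  by move=> x; rewrite mem_iota /= => /andP[_ h]; lia.
rewrite count_pred0 add0n (eq_in_count (a2 := predT)); last by move=> x; rewrite mem_iota /= => /andP[h _].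
by rewrite count_predT size_iota.
Qed.

Lemma trel_deg N (p : {ffun 'I_N -> 'I_N}) (v : 'I_N) :
  validp p -> degree (trel p) v <= N - v.
Proof.
move=> vp; rewrite /degree.
have sub : [pred j | trel p v j] \subset [predU pred1 (p v) & [pred j : 'I_N | v < j]].
  apply/subsetP => j; rewrite !inE /=.
  case: (ltnP v j) => h; first by rewrite orbT.
  move=> hj; rewrite orbF.
  have hlt : j < v.
    rewrite ltn_neqAle h andbT; apply/eqP => /val_inj e.
    by move: hj; rewrite e /trel orbb; case/andP=> ha /eqP hp;
       move/validP: vp => /(_ _ ha); rewrite hp ltnn.
  by apply/eqP; exact: trel_low vp hj hlt.
apply: leq_trans (subset_leq_card sub) _.
have := cardUI (pred1 (p v)) [pred j : 'I_N | v < j].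
rewrite card1 card_gt => hc.
have := ltn_ord v.
move=> hvN; apply: leq_trans (leq_addr #|[predI pred1 (p v) & [pred j : 'I_N | v < j]]| _) _; rewrite hc; lia.
Qed.

Theorem lemma3 (N : nat) (g : 'I_N -> R) :
  (2 <= N)%N ->
  (forall k : 'I_N, (0 < g k)%R) ->
  (forall k l : 'I_N, (k <= l)%N -> (g k <= g l)%R) ->
  exists e : rel 'I_N,
    sum_rate_optimal g e /\
    forall (i : nat) (v : 'I_N),
      (0 < i)%N -> (i < N - 1)%N -> nat_of_ord v = (N - 1 - i)%N ->
      (forall u w : 'I_N, e v u -> e v w ->
          (g u < g v)%R -> (g w < g v)%R -> u = w) /\
      (degree e v <= i + 1)%N.
Proof.
move=> hN gp gm.
have hN0 : 0 < N by apply: leq_trans hN.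
pose v0 : 'I_N := Ordinal hN0.
pose p0 : {ffun 'I_N -> 'I_N} := [ffun => v0].
have vp0 : validp p0 by apply/validP => v hv; rewrite ffunE.
have p0in : p0 \in enum (@validp N) by rewrite mem_enum.
have [pb] := @argmax _ (fun p => sum_rate g (trel p)) (enum (@validp N)) p0 p0in.
rewrite mem_enum => vpb hmax.
exists (trel pb); split.
  split; first exact: trel_spanning.
  move=> e' [sg [ce _]].
  apply: Rle_trans (hmax (cpar e') _); last by rewrite mem_enum; apply: cpar_valid.
  apply: sum_rate_le => // x.
  apply: min_phi_le => //; last exact: cpar_nb.
  case: (posnP x) => hx.
    have h1 : 1 < N by [].
    pose o1 : 'I_N := Ordinal h1.
    exists o1; rewrite /trel /=.
    have [hl _] := cpar_spec ce (isT : 0 < o1).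
    apply/orP; right; apply/eqP; apply: val_inj; rewrite /= hx; move: hl; rewrite /o1 /=; lia.
  by exists (cpar e' x); rewrite /trel hx eqxx.
move=> i v hi hiN hv; split.
  move=> u w hu hw gu gw.
  have lt : forall y : 'I_N, (g y < g v)%R -> y < v.
    move=> y hy; rewrite ltnNge; apply/negP => hle.
    have := gm _ _ hle; lra.
  by rewrite (trel_low vpb hu (lt _ gu)) (trel_low vpb hw (lt _ gw)).
apply: leq_trans (trel_deg v vpb) _; lia.
Qed.
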